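(* Every welded knot diagram can be transformed into a diagram of the trivial knot by a finite sequence of diagonal moves (together with classical and welded Reidemeister moves).
   Context: A welded knot diagram is a knot diagram that may have welded (virtual) crossings as well as classical crossings; welded knots are equivalence classes of welded knot diagrams under the three classical Reidemeister moves and the welded Reidemeister moves (the virtual Reidemeister moves together with the over-forbidden-type move allowing a strand passing over to slide past a welded crossing). A diagonal move (D-move) is a local move on a diagram defined as follows. Consider a disk in which the diagram consists of four arcs $a,b,c,d$ arranged in a ''$\#$'' pattern: $a$ and $c$ do not meet each other, $b$ and $d$ do not meet each other, and each of $a,c$ crosses each of $b,d$ exactly once in a classical crossing, giving four crossings labelled $1,2,3,4$ in cyclic order around the central square. The pairs $\{1,3\}$ and $\{2,4\}$ are the diagonal crossing pairs. A diagonal move changes the over/under information at both crossings of one diagonal pair and leaves the rest of the diagram unchanged; it is allowed for every choice of orientations of the arcs. *)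

(* Defs.v *)
(* Welded knot diagrams are encoded by their
   Gauss codes (Gauss diagrams). *)
From mathcomp Require Import all_boot.
From Stdlib Require Import Relations.
Set Implicit Arguments. Unset Strict Implicit. Unset Printing Implicit Defensive.

(* A letter of a Gauss code: (crossing label, over? , positive sign?) *)
Definition letter := (nat * bool * bool)%type.
Definition lab (x : letter) : nat := x.1.1.
Definition ov (x : letter) : bool := x.1.2.
Definition sg (x : letter) : bool := x.2.
Definition partner (x : letter) : letter := (lab x, ~~ ov x, sg x).

(* A (based) Gauss code of a one-component diagram, read along the knot. *)
Definition code := seq letter.

(* Well-formed Gauss code = welded knot diagram: every classical crossing is
   met exactly twice, once as over- and once as under-crossing, with one sign. *)
Definition wf_code (w : code) : bool :=
  uniq w && all (fun x => (partner x \in w) &&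
                          (count (fun y => lab y == lab x) w == 2)) w.

Definition flip (l : nat) (w : code) : code :=
  [seq if lab x == l then partner (lab x, ov x, ~~ sg x) else x | x <- w].

(* Local moves: the code is  f0 s1 g1 s2 g2 ... sk gk  where the segments
   s_i (in any order along the knot) are replaced by new segments s_i'. *)
Definition plug (f0 : code) (L : seq (code * code)) : code :=
  f0 ++ flatten [seq x.1 ++ x.2 | x <- L].

Definition local_move (P : seq (code * code)) (w w' : code) : Prop :=
  exists (f0 : code) (Q : seq (code * code)) (fills : seq code),
    [/\ perm_eq Q P, size fills = size Q,
        w = plug f0 (zip (map fst Q) fills) &
        w' = plug f0 (zip (map snd Q) fills)].

(* Sign convention: a crossing is positive iff det(d_over, d_under) > 0. *)

Definition R1 (w w' : code) : Prop :=
  exists (c : nat) (o s : bool), local_move [:: ([:: (c, o, s); (c, ~~ o, s)], [::])] w w'.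

(* Reidemeister II: delete a bigon (two crossings of opposite signs, one strand
   over the other at both). *)
Definition pairseg (c d : nat) (s b over : bool) : code :=
  if b then [:: (c, over, s); (d, over, ~~ s)] else [:: (d, over, ~~ s); (c, over, s)].

Definition R2 (w w' : code) : Prop :=
  exists (c d : nat) (s b1 b2 : bool), c <> d /\
    local_move [:: (pairseg c d s b1 true, [::]); (pairseg c d s b2 false, [::])] w w'.

(* Three straight strands Top > Mid > Bot (heights) bound a
   small triangle.  rho fixes the counterclockwise cyclic order of the sides
   (T,M,B if rho, T,B,M otherwise); sig X says whether strand X runs along the
   counterclockwise boundary orientation of the triangle.  The move reverses
   all sig X (translating one strand across the opposite vertex). *)
Inductive strand := ST | SM | SB.
Definition height (X : strand) : nat := match X with ST => 2 | SM => 1 | SB => 0 end.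
Definition next (rho : bool) (X : strand) : strand :=
  match X with
  | ST => if rho then SM else SB
  | SM => if rho then SB else ST
  | SB => if rho then ST else SM end.
Definition prev (rho : bool) (X : strand) : strand := next (~~ rho) X.
Definition seqstr (X Y : strand) : bool := height X == height Y.

Definition R3letter (p q r : nat) (rho : bool) (sig : strand -> bool)
    (X Y : strand) : letter :=
  let l := match X, Y with
           | ST, SM | SM, ST => p | ST, SB | SB, ST => q | _, _ => r end in
  let U := if height Y < height X then X else Y in
  let V := if height Y < height X then Y else X in
  let s := if seqstr (next rho U) V then sig U == sig V else sig U != sig V in
  (l, height Y < height X, s).

Definition R3seg (p q r : nat) (rho : bool) (sig : strand -> bool) (X : strand) : code :=
  if sig X then [:: R3letter p q r rho sig X (prev rho X); R3letter p q r rho sig X (next rho X)]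
  else [:: R3letter p q r rho sig X (next rho X); R3letter p q r rho sig X (prev rho X)].

Definition R3 (w w' : code) : Prop :=
  exists (p q r : nat) (rho sT sM sB : bool),
    [/\ p <> q, q <> r, p <> r &
    let sig X := match X with ST => sT | SM => sM | SB => sB end in
    local_move [seq (R3seg p q r rho sig X, R3seg p q r rho (fun Y => ~~ sig Y) X)
               | X <- [:: ST; SM; SB]] w w'].

(* Welded (over-commute) move: two consecutive over-crossings commute. *)
Definition OC (w w' : code) : Prop :=
  exists x y : letter, [/\ ov x, ov y, lab x <> lab y &
    local_move [:: ([:: x; y], [:: y; x])] w w'].

(* Change of base point. *)
Definition Rot (w w' : code) : Prop := w' = rot 1 w.

Definition welded_move (w w' : code) : Prop :=
  Rot w w' \/ R1 w w' \/ R2 w w' \/ R3 w w' \/ OC w w'.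

(* The "#": horizontal arcs a (y=0, direction al) and
   c (y=1, direction ga), vertical arcs b (x=0, direction be) and d (x=1,
   direction de); crossings 1=a.b at (0,0), 2=b.c at (0,1), 3=c.d at (1,1),
   4=d.a at (1,0), labels l1..l4; hi says whether the horizontal arc is over
   at crossing i.  Diagonal pairs {1,3} and {2,4}. *)
Definition hsign (eta theta hover : bool) : bool :=
  if hover then eta == theta else eta != theta.
Definition hletter (l : nat) (eta theta hover : bool) : letter :=
  (l, hover, hsign eta theta hover).
Definition vletter (l : nat) (eta theta hover : bool) : letter :=
  (l, ~~ hover, hsign eta theta hover).
Definition ord2 (b : bool) (x y : letter) : code := if b then [:: x; y] else [:: y; x].

Definition sharp_segs (l1 l2 l3 l4 : nat) (al be ga de h1 h2 h3 h4 : bool) : seq code :=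
  [:: ord2 al (hletter l1 al be h1) (hletter l4 al de h4);
      ord2 be (vletter l1 al be h1) (vletter l2 ga be h2);
      ord2 ga (hletter l2 ga be h2) (hletter l3 ga de h3);
      ord2 de (vletter l4 al de h4) (vletter l3 ga de h3)].

Definition Dmove (w w' : code) : Prop :=
  exists (l1 l2 l3 l4 : nat) (al be ga de h1 h2 h3 h4 : bool),
    [/\ uniq [:: l1; l2; l3; l4],
        local_move [seq (s, s) | s <- sharp_segs l1 l2 l3 l4 al be ga de h1 h2 h3 h4] w w &
        (w' = flip l1 (flip l3 w) \/ w' = flip l2 (flip l4 w))].

Definition wD_step (w w' : code) : Prop :=
  [/\ wf_code w, wf_code w' & (welded_move w w' \/ Dmove w w')].

Definition trivial_code : code := [::].

(* Main.v *)
Require Import Defs.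
From mathcomp Require Import all_boot zify ring.
From Stdlib Require Import Relations.
Set Implicit Arguments. Unset Strict Implicit. Unset Printing Implicit Defensive.

Lemma partnerK x : partner (partner x) = x.
Proof. by case: x => [[n o] s]; rewrite /partner /= negbK. Qed.

Definition fl (l : nat) (x : letter) : letter :=
  if lab x == l then partner (lab x, ov x, ~~ sg x) else x.

Lemma flipE l w : flip l w = map (fl l) w.
Proof. by []. Qed.

Lemma lab_fl l x : lab (fl l x) = lab x.
Proof. by rewrite /fl; case: ifP. Qed.

Lemma flK l : involutive (fl l).
Proof.
move=> [[n o] s]; rewrite /fl /lab /ov /sg /partner /=.
case: (n =P l) => [->|ne] /=; first by rewrite eqxx !negbK.
by move/eqP: ne => /negbTE ->.
Qed.

Lemma fl_partner l x : fl l (partner x) = partner (fl l x).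
Proof.
case: x => [[n o] s]; rewrite /fl /lab /ov /sg /partner /=.
by case: eqP.
Qed.

Lemma count_lab_flip l w (y : nat) :
  count (fun z => lab z == y) (flip l w) = count (fun z => lab z == y) w.
Proof. by rewrite flipE count_map; apply: eq_count => z /=; rewrite lab_fl. Qed.

Lemma wf_flip l w : wf_code w -> wf_code (flip l w).
Proof.
case/andP=> U /allP A; apply/andP; split.
  by rewrite flipE map_inj_uniq //; apply: (can_inj (flK l)).
apply/allP=> z; rewrite flipE => /mapP [x xw ->].
case/andP: (A x xw) => px cx.
rewrite -fl_partner map_f //= -flipE count_lab_flip lab_fl //.
Qed.

Lemma wf_perm w w' : perm_eq w w' -> wf_code w -> wf_code w'.
Proof.
move=> P /andP [U /allP A]; apply/andP; split; first by rewrite -(perm_uniq P).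
apply/allP=> x; rewrite -(perm_mem P) => xw.
case/andP: (A x xw) => px cx.
by rewrite -(perm_mem P) px -(permP P).
Qed.

Lemma flip_fresh l s : l \notin map lab s -> flip l s = s.
Proof.
elim: s => //= x s IH; rewrite inE negb_or => /andP [H1 H2].
by rewrite IH // /fl eq_sym (negbTE H1).
Qed.

Lemma wf_cons2 c o s w : wf_code w -> c \notin map lab w ->
  wf_code ((c, o, s) :: (c, ~~ o, s) :: w).
Proof.
case/andP=> U /allP A F.
have Fw : forall x, x \in w -> lab x != c.
  by move=> x xw; apply/eqP=> E; move: F; rewrite -E map_f.
have cnt : count (fun y => lab y == c) w = 0.
  by apply/eqP; rewrite -leqn0 leqNgt -has_count; apply/hasPn => x /Fw.
apply/andP; split.
  rewrite /= U andbT !inE negb_or -andbA; apply/and3P; split.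
  - by apply/eqP => -[]; case: o.
  - by apply/negP => /Fw; rewrite /lab /= eqxx.
  - by apply/negP => /Fw; rewrite /lab /= eqxx.
rewrite /= /partner /lab /ov /sg /= negbK !eqxx /= !inE !eqxx /= !orbT /=.
rewrite cnt eqxx /=.
apply/allP => x xw; case/andP: (A x xw) => px cx.
have := Fw x xw; rewrite /lab /= => ne.
rewrite !inE; have -> : (x.1.1, ~~ x.1.2, x.2) \in w := px.
by rewrite !orbT /= [c == _]eq_sym (negbTE ne).
Qed.

Lemma partner_neq x : x != partner x.
Proof. by case: x => [[n o] s]; rewrite /partner /=; apply/eqP => -[]; case: o. Qed.

Lemma partner_unique w x y : wf_code w -> x \in w -> y \in w ->
  lab y = lab x -> y != x -> y = partner x.
Proof.
case/andP=> U /allP A xw yw E ne; apply/eqP; apply/negPn/negP => ne2.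
case/andP: (A x xw) => px /eqP cx.
have : size [:: x; partner x; y] <= size (filter (fun z => lab z == lab x) w).
  apply: uniq_leq_size.
    rewrite /= !inE negb_or partner_neq eq_sym ne /= andbT.
    by rewrite eq_sym.
  move=> z; rewrite !inE mem_filter => /or3P [] /eqP ->.
  - by rewrite eqxx.
  - by rewrite px /partner /lab /= eqxx.
  - by rewrite yw E eqxx.
by rewrite size_filter cx.
Qed.

Lemma wf_uncons2 x w : wf_code (x :: partner x :: w) -> wf_code w.
Proof.
case/andP=> U0 /allP A; move: U0 => /= /and3P [_ _ U]; apply/andP; split => //.
apply/allP => y yw.
have := A y; rewrite !inE yw !orbT => /(_ isT) /andP [py cy].
have cw : 0 < count (fun z => lab z == lab y) w.
  by rewrite -has_count; apply/hasP; exists y => //.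
case: (eqVneq (lab y) (lab x)) => [E|ne].
  have Lp : lab (partner x) = lab x by [].
  move: cy cw; rewrite /= E Lp eqxx; lia.
move: py => /or3P [/eqP Ep|/eqP Ep|Ep].
- by move: ne; rewrite -Ep /partner /lab /= eqxx.
- move: ne; have: lab (partner y) = lab (partner x) by rewrite Ep.
  by rewrite /partner /lab /= => ->; rewrite eqxx.
rewrite Ep /=; move: cy => /=.
have Lp : lab (partner x) = lab x by [].
by rewrite Lp [lab x == _]eq_sym (negbTE ne).
Qed.

Lemma lm1 f h s t : local_move [:: (s, t)] (f ++ s ++ h) (f ++ t ++ h).
Proof.
exists f, [:: (s, t)], [:: h]; split => //; by rewrite /plug /= cats0.
Qed.

Lemma lm2 F1 F2 F3 s1 t1 s2 t2 :
  local_move [:: (s1, t1); (s2, t2)] (F1 ++ s1 ++ F2 ++ s2 ++ F3) (F1 ++ t1 ++ F2 ++ t2 ++ F3).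
Proof.
exists F1, [:: (s1, t1); (s2, t2)], [:: F2; F3]; split => //;
by rewrite /plug /= cats0 -!catA.
Qed.

Lemma lm2' F1 F2 F3 s1 t1 s2 t2 :
  local_move [:: (s1, t1); (s2, t2)] (F1 ++ s2 ++ F2 ++ s1 ++ F3) (F1 ++ t2 ++ F2 ++ t1 ++ F3).
Proof.
exists F1, [:: (s2, t2); (s1, t1)], [:: F2; F3]; split => //.
- by apply/permP => p /=; rewrite addnCA.
- by rewrite /plug /= cats0 -!catA.
- by rewrite /plug /= cats0 -!catA.
Qed.

Lemma lm4 F0 G1 G2 G3 G4 A B C D :
  local_move [:: (A, A); (B, B); (C, C); (D, D)]
     (F0 ++ A ++ G1 ++ B ++ G2 ++ C ++ G3 ++ D ++ G4)
     (F0 ++ A ++ G1 ++ B ++ G2 ++ C ++ G3 ++ D ++ G4).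
Proof.
exists F0, [:: (A, A); (B, B); (C, C); (D, D)], [:: G1; G2; G3; G4]; split => //;
by rewrite /plug /= cats0 -!catA.
Qed.

Lemma step_R1 f h c o s :
  wf_code (f ++ [:: (c, o, s); (c, ~~ o, s)] ++ h) ->
  wD_step (f ++ [:: (c, o, s); (c, ~~ o, s)] ++ h) (f ++ h).
Proof.
move=> W; split => //.
  apply: (@wf_uncons2 (c, o, s)).
  rewrite (_ : partner (c, o, s) = (c, ~~ o, s)) //; apply: wf_perm W.
  by apply/permP => p; rewrite /= !count_cat /=; lia.
left; right; left; exists c, o, s.
by have := lm1 f h [:: (c, o, s); (c, ~~ o, s)] [::].
Qed.

Lemma step_OC f h x y : ov x -> ov y -> lab x <> lab y ->
  wf_code (f ++ x :: y :: h) -> wD_step (f ++ x :: y :: h) (f ++ y :: x :: h).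
Proof.
move=> ox oy ne W; split => //.
  by apply: wf_perm W; apply/permP => p; rewrite /= !count_cat /=; lia.
left; do 4 right; exists x, y; split => //.
exact: (lm1 f h [:: x; y] [:: y; x]).
Qed.

Definition flP l (p : code * code) := (flip l p.1, flip l p.2).

Lemma flip_cat l s t : flip l (s ++ t) = flip l s ++ flip l t.
Proof. by rewrite !flipE map_cat. Qed.

Lemma flip_plug l f0 A B :
  flip l (plug f0 (zip A B)) = plug (flip l f0) (zip (map (flip l) A) (map (flip l) B)).
Proof.
rewrite /plug flip_cat; congr (_ ++ _).
elim: A B => [|a A IH] [|b B] //=.
by rewrite !flip_cat IH.
Qed.

Lemma local_move_flip l P u v : local_move P u v ->
  local_move (map (flP l) P) (flip l u) (flip l v).
Proof.
case=> f0 [Q [fills [PQ sz -> ->]]].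
exists (flip l f0), (map (flP l) Q), (map (flip l) fills); split.
- exact: perm_map.
- by rewrite !size_map.
- by rewrite flip_plug -!map_comp.
- by rewrite flip_plug -!map_comp.
Qed.

Notation crst := (clos_refl_sym_trans code wD_step).

Lemma eq_lm P u v u' v' : local_move P u v -> u = u' -> v = v' -> local_move P u' v'.
Proof. by move=> H <- <-. Qed.

Lemma R1_flip l u v : R1 u v -> R1 (flip l u) (flip l v).
Proof.
case=> c [o [s H]].
have H0 : local_move [:: (flip l [:: (c, o, s); (c, ~~ o, s)], [::])] (flip l u) (flip l v)
  := local_move_flip l H.
case: (eqVneq c l) => [E|ne].
  subst c; exists l, (~~ o), (~~ s).
  have E : flip l [:: (l, o, s); (l, ~~ o, s)] = [:: (l, ~~ o, ~~ s); (l, ~~ ~~ o, ~~ s)].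
    by rewrite /flip /= /fl /= eqxx.
  by rewrite E in H0.
exists c, o, s.
have E : flip l [:: (c, o, s); (c, ~~ o, s)] = [:: (c, o, s); (c, ~~ o, s)].
  by rewrite /flip /= /fl /lab /= (negbTE ne).
by rewrite E in H0.
Qed.

Lemma flip_pairseg l c d s b ov : l != c -> l != d ->
  flip l (pairseg c d s b ov) = pairseg c d s b ov.
Proof.
move=> nc nd; rewrite /pairseg /= /fl /lab /=.
by case: b => /=; rewrite ![_ == l]eq_sym (negbTE nc) (negbTE nd).
Qed.

Definition R2pat c d s b1 b2 := [:: (pairseg c d s b1 true, [::] : code); (pairseg c d s b2 false, [::])].

Lemma step_R2 u v c d s b1 b2 : c <> d -> wf_code u -> wf_code v ->
  local_move (R2pat c d s b1 b2) u v -> wD_step u v.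
Proof.
move=> ne Wu Wv H; split => //; left; right; right; left.
by exists c, d, s, b1, b2.
Qed.

Lemma step_R2_flip l u v c d s b1 b2 : c <> d -> l != c -> l != d -> wf_code u -> wf_code v ->
  local_move (R2pat c d s b1 b2) u v -> wD_step (flip l u) (flip l v).
Proof.
move=> ne nc nd Wu Wv H; apply: (step_R2 (c := c) (d := d) (s := s) (b1 := b1) (b2 := b2)) => //;
  try exact: wf_flip.
have H0 : local_move [:: (flip l (pairseg c d s b1 true), flip l [::]);
   (flip l (pairseg c d s b2 false), flip l [::])] (flip l u) (flip l v) := local_move_flip l H.
by rewrite !flip_pairseg in H0.
Qed.

Lemma step_R1_flip l u v : wf_code u -> wf_code v -> R1 u v -> wD_step (flip l u) (flip l v).
Proof.
move=> Wu Wv H; split; try exact: wf_flip.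
by left; right; left; apply: R1_flip.
Qed.

Lemma step_R1' u v : wf_code u -> wf_code v -> R1 u v -> wD_step u v.
Proof. by move=> Wu Wv H; split => //; left; right; left. Qed.

Definition maxlab (s : code) := foldr (fun x m => maxn (lab x) m) 0 s.

Lemma maxlabP s x : x \in s -> lab x <= maxlab s.
Proof.
elim: s => //= y s IH; rewrite inE => /orP [/eqP ->|/IH H].
  by rewrite leq_maxl.
by rewrite (leq_trans H) // leq_maxr.
Qed.

Lemma fresh_notin s n : maxlab s < n -> n \notin map lab s.
Proof.
move=> H; apply/negP => /mapP [x xs E].
by have := maxlabP xs; rewrite -E; lia.
Qed.

Lemma lm_R2_flip l u v c d s b1 b2 : l != c -> l != d ->
  local_move (R2pat c d s b1 b2) u v -> local_move (R2pat c d s b1 b2) (flip l u) (flip l v).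
Proof.
move=> nc nd H.
have H0 : local_move [:: (flip l (pairseg c d s b1 true), flip l [::]);
   (flip l (pairseg c d s b2 false), flip l [::])] (flip l u) (flip l v) := local_move_flip l H.
by rewrite !flip_pairseg in H0.
Qed.

Lemma back u v : wD_step v u -> crst u v.
Proof. by move=> H; apply: rst_sym; apply: rst_step. Qed.

Lemma fwd u v : wD_step u v -> crst u v.
Proof. by move=> H; apply: rst_step. Qed.

Lemma crst_trans u v w : crst u v -> crst v w -> crst u w.
Proof. exact: rst_trans. Qed.

Definition W3g (f g h : code) X o be l2 l2' l3 l4 l4' : code :=
  f ++ (X, o, hsign true be o) :: pairseg l4 l4' true true false ++ g ++
  (if be then (X, ~~ o, hsign true be o) :: pairseg l2 l2' be true false
   else pairseg l2 l2' be false false ++ [:: (X, ~~ o, hsign true be o)]) ++ h ++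
  pairseg l2 l2' be false true ++ [:: (l3, true, false); (l3, false, false)] ++
  pairseg l4 l4' true true true.

Lemma DM_gen f g h X o be l2 l2' l3 l4 l4' : uniq [:: X; l2; l3; l4] ->
  Dmove (W3g f g h X o be l2 l2' l3 l4 l4') (flip X (flip l3 (W3g f g h X o be l2 l2' l3 l4 l4'))).
Proof.
move=> U; exists X, l2, l3, l4, true, be, true, false, o, true, true, false; split => //; last by left.
rewrite /sharp_segs /ord2 /hletter /vletter /= /W3g /pairseg.
case: be => /=.
- apply: (eq_lm (lm4 f ((l4', false, false) :: g) ([:: (l2', false, false)] ++ h ++ [:: (l2', true, false)]) [::] [:: (l4', true, false)] _ _ _ _)).
  + by rewrite /= -?catA /= -?catA /=.
  + by rewrite /= -?catA /= -?catA /=.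
- apply: (eq_lm (lm4 f ((l4', false, false) :: g ++ [:: (l2', false, true)]) (h ++ [:: (l2', true, true)]) [::] [:: (l4', true, false)] _ _ _ _)).
  + by rewrite /= -?catA /= -?catA /=.
  + by rewrite /= -?catA /= -?catA /=.
Qed.

Section G.
Variables (f g h : code) (X : nat) (o be : bool).
Let s := hsign true be o.
Let a : letter := (X, o, s).
Let b : letter := (X, ~~ o, s).
Let w0 := f ++ a :: g ++ b :: h.
Let N := (maxlab w0).+1.
Let l2 := N. Let l2' := N.+1. Let l3 := N.+2. Let l4 := N.+3. Let l4' := N.+4.
Let K : code := [:: (l3, true, false); (l3, false, false)].
Let Bq : code := if be then b :: pairseg l2 l2' be true false
                 else pairseg l2 l2' be false false ++ [:: b].
Let Cp := pairseg l2 l2' be false true.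
Let Au := pairseg l4 l4' true true false.
Let Do := pairseg l4 l4' true true true.
Let w1 := w0 ++ K.
Let w2 := f ++ a :: g ++ Bq ++ h ++ Cp ++ K.
Let w3 := f ++ a :: Au ++ g ++ Bq ++ h ++ Cp ++ K ++ Do.

Hypothesis W0 : wf_code w0.

Lemma fr k : N <= k -> k \notin map lab w0.
Proof. by move=> H; apply: fresh_notin. Qed.

Lemma XN : X < N.
Proof. by rewrite ltnS; apply: (maxlabP (x := a)); rewrite /w0 mem_cat inE eqxx orbT. Qed.

Ltac frsh := rewrite /= ?inE ?negb_or; repeat (apply/andP; split);
  try (apply: fr; rewrite /l2 /l2' /l3 /l4 /l4'; lia);
  rewrite /lab /= /l2 /l2' /l3 /l4 /l4'; lia.

Lemma W1 : wf_code w1.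
Proof.
apply: (@wf_perm (K ++ w0)); first by rewrite perm_catC.
by apply: wf_cons2 => //; apply: fr; rewrite /l3; lia.
Qed.

Lemma W2 : wf_code w2.
Proof.
apply: (@wf_perm ((l2, true, be) :: (l2, ~~ true, be) :: (l2', true, ~~ be) :: (l2', ~~ true, ~~ be) :: K ++ w0)).
  apply/permP => p; rewrite /w2 /w0 /Bq /Cp /K /pairseg; case: (be);
  rewrite /= !count_cat /= ?count_cat /= ?count_cat /=; ring.
do 2 (apply: wf_cons2; last by frsh).
change (K ++ w0) with ((l3, true, false) :: (l3, ~~ true, false) :: w0).
by apply: wf_cons2 => //; frsh.
Qed.

Lemma W3 : wf_code w3.
Proof.
apply: (@wf_perm ((l4, true, true) :: (l4, ~~ true, true) :: (l4', true, false) :: (l4', ~~ true, false) ::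
   (l2, true, be) :: (l2, ~~ true, be) :: (l2', true, ~~ be) :: (l2', ~~ true, ~~ be) :: K ++ w0)).
  apply/permP => p; rewrite /w3 /w0 /Bq /Cp /K /Au /Do /pairseg; case: (be);
  rewrite /= !count_cat /= ?count_cat /= ?count_cat /= ?count_cat /=; ring.
do 4 (apply: wf_cons2; last by frsh).
change (K ++ w0) with ((l3, true, false) :: (l3, ~~ true, false) :: w0).
by apply: wf_cons2 => //; frsh.
Qed.

Lemma R10 : R1 w1 w0.
Proof.
exists l3, true, false.
apply: (eq_lm (lm1 w0 [::] K [::])); by rewrite ?cats0.
Qed.

Lemma S10 : wD_step w1 w0.
Proof. by apply: step_R1' => //; [exact: W1 | exact: R10]. Qed.

Lemma M21 : local_move (R2pat l2 l2' be false be) w2 w1.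
Proof.
rewrite /R2pat.
have [E|E] : be = true \/ be = false by case: be; auto.
- apply: (eq_lm (lm2' (f ++ a :: g ++ [:: b]) h K Cp [::] (pairseg l2 l2' be be false) [::])).
  + by rewrite /w2 /Bq E /= -?catA /= -?catA /=.
  + by rewrite /w1 /w0 /= -?catA /= -?catA /=.
- apply: (eq_lm (lm2' (f ++ a :: g) (b :: h) K Cp [::] (pairseg l2 l2' be be false) [::])).
  + by rewrite /w2 /Bq E /= -?catA /= -?catA /=.
  + by rewrite /w1 /w0 /= -?catA /= -?catA /=.
Qed.

Lemma M32 : local_move (R2pat l4 l4' true true true) w3 w2.
Proof.
apply: (eq_lm (lm2' (f ++ [:: a]) (g ++ Bq ++ h ++ Cp ++ K) [::] Do [::] Au [::])).
  by rewrite /w3 /= -?catA /= -?catA /= ?cats0.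
by rewrite /w2 /= -?catA /= -?catA /= ?cats0.
Qed.

Lemma gadget_sec : crst w0 (flip X w0).
Proof.
have XN' := XN.
have n22 : l2 <> l2' by rewrite /l2 /l2'; lia.
have n44 : l4 <> l4' by rewrite /l4 /l4'; lia.
have F3 : forall k, k \in [:: l2; l2'; l4; l4'] -> (l3 != k) && (X != k).
  by move=> k; rewrite !inE /l2 /l2' /l3 /l4 /l4' => /or4P [] /eqP ->; apply/andP; split; lia.
have [F3a F3b] : (l3 != l2) /\ (X != l2) by apply/andP; apply: F3; rewrite !inE eqxx.
have [F3c F3d] : (l3 != l2') /\ (X != l2') by apply/andP; apply: F3; rewrite !inE eqxx !orbT.
have [F3e F3f] : (l3 != l4) /\ (X != l4) by apply/andP; apply: F3; rewrite !inE eqxx !orbT.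
have [F3g F3h] : (l3 != l4') /\ (X != l4') by apply/andP; apply: F3; rewrite !inE eqxx !orbT.
have FF : forall u, wf_code u -> wf_code (flip X (flip l3 u)) by move=> u Wu; do 2 apply: wf_flip.
apply: (crst_trans (back S10)).
apply: (crst_trans (back (step_R2 n22 W2 W1 M21))).
apply: (crst_trans (back (step_R2 n44 W3 W2 M32))).
have DM : wD_step w3 (flip X (flip l3 w3)).
  split; [exact: W3 | exact: FF W3 | right].
  apply: DM_gen; rewrite /= !inE /l2 /l3 /l4; lia.
apply: (crst_trans (fwd DM)).
apply: (crst_trans (fwd (step_R2 n44 (FF _ W3) (FF _ W2) _))).
  by do 2 apply: lm_R2_flip => //; exact: M32.
apply: (crst_trans (fwd (step_R2 n22 (FF _ W2) (FF _ W1) _))).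
  by do 2 apply: lm_R2_flip => //; exact: M21.
apply: (crst_trans (fwd (step_R1_flip X (wf_flip _ W1) (wf_flip _ W0) (R1_flip l3 R10)))).
rewrite (flip_fresh (l := l3)); first exact: rst_refl.
by apply: fr; rewrite /l3; lia.
Qed.

End G.

Lemma gadget f g h X o be :
  wf_code (f ++ (X, o, hsign true be o) :: g ++ (X, ~~ o, hsign true be o) :: h) ->
  crst (f ++ (X, o, hsign true be o) :: g ++ (X, ~~ o, hsign true be o) :: h)
       (flip X (f ++ (X, o, hsign true be o) :: g ++ (X, ~~ o, hsign true be o) :: h)).
Proof. exact: gadget_sec. Qed.

Lemma split2 (s : code) x y : x \in s -> y \in s -> x != y ->
  exists f g h, s = f ++ x :: g ++ y :: h \/ s = f ++ y :: g ++ x :: h.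
Proof.
case/splitPr => f1 h1; rewrite mem_cat inE => /or3P [yf|/eqP->|yh] ne.
- case/splitPr: yf => f g; exists f, g, h1; right; by rewrite -catA.
- by rewrite eqxx in ne.
- case/splitPr: yh => g h; exists f1, g, h; by left.
Qed.

Lemma gadget' f g h z : wf_code (f ++ z :: g ++ partner z :: h) ->
  crst (f ++ z :: g ++ partner z :: h) (flip (lab z) (f ++ z :: g ++ partner z :: h)).
Proof.
case: z => [[X o] s0] W.
have E : s0 = hsign true (if o then s0 else ~~ s0) o by clear W; case: o; case: s0.
move: W; rewrite /partner /lab /ov /sg /= E => W.
exact: gadget.
Qed.

Lemma flip_conn w c : wf_code w -> crst w (flip c w).
Proof.
move=> W; case: (boolP (c \in map lab w)) => [/mapP [x xw E] | nc]; last first.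
  by rewrite flip_fresh //; apply: rst_refl.
have px : partner x \in w by case/andP: W => _ /allP /(_ x xw) /andP [].
have [f [g [h [Ew|Ew]]]] := split2 xw px (partner_neq x).
- by rewrite E Ew; apply: gadget'; rewrite -Ew.
- have Ew' : w = f ++ partner x :: g ++ partner (partner x) :: h by rewrite partnerK.
  rewrite E Ew'; have -> : lab x = lab (partner x) by [].
  by apply: gadget'; rewrite -Ew'.
Qed.

Lemma first_rep (s : code) : ~~ uniq (map lab s) ->
  exists f x m y h, [/\ s = f ++ x :: m ++ y :: h, lab y = lab x & uniq (map lab (x :: m))].
Proof.
elim/last_ind: s => // s z IH.
case: (boolP (uniq (map lab s))) => [U|NU] H; last first.
  have [f [x [m [y [h [E1 E2 E3]]]]]] := IH NU.
  exists f, x, m, y, (rcons h z); split => //.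
  by rewrite E1 -!cats1 /= -!catA /= -?catA.
move: H; rewrite map_rcons rcons_uniq U andbT negbK => /mapP [x xs Ez].
case/splitPr: xs U => f m U.
exists f, x, m, z, [::]; split => //.
- by rewrite -cats1 -catA.
- by move: U; rewrite map_cat cat_uniq => /and3P [].
Qed.

Lemma uniq_count (w : code) l : uniq (map lab w) -> count (fun y => lab y == l) w <= 1.
Proof.
move=> U; have -> : count (fun y => lab y == l) w = count_mem l (map lab w) by rewrite count_map.
by rewrite count_uniq_mem //; case: (_ \in _).
Qed.

Lemma fl_id l x : lab x != l -> fl l x = x.
Proof. by rewrite /fl => /negbTE ->. Qed.

Definition red (w : code) := exists w', [/\ wf_code w', size w' < size w & crst w w'].

Lemma red_crst w v : crst w v -> size v = size w -> red v -> red w.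
Proof.
move=> H E [w' [W' S C]]; exists w'; split => //; first by rewrite -E.
exact: crst_trans C.
Qed.

Lemma walk m : forall f h x, wf_code (f ++ x :: m ++ partner x :: h) -> ov x ->
  uniq (map lab (x :: m)) -> red (f ++ x :: m ++ partner x :: h).
Proof.
elim: m => [|z m IH] f h x W ox U.
  case: x W ox U => [[c o] s] W _ _.
  have St := @step_R1 f h c o s W.
  exists (f ++ h); split; first by case: St.
  - by rewrite !size_cat /=; lia.
  - exact: fwd St.
move: U => /= /andP []; rewrite inE negb_or => /andP [nxz nxm] /andP [nzm um].
have key : forall f h z, ov z -> lab x != lab z -> lab z \notin map lab m ->
    wf_code (f ++ x :: z :: m ++ partner x :: h) ->
    red (f ++ x :: z :: m ++ partner x :: h).
  move=> f1 h1 z1 oz1 n1 n2 W1.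
  have St := @step_OC f1 (m ++ partner x :: h1) x z1 ox oz1 (elimN eqP n1) W1.
  apply: (red_crst (fwd St)); first by rewrite !size_cat.
  have -> : f1 ++ z1 :: x :: m ++ partner x :: h1 = (f1 ++ [:: z1]) ++ x :: m ++ partner x :: h1
    by rewrite -catA.
  apply: IH => //; last by rewrite /= nxm.
  by rewrite -catA; case: St.
case: (boolP (ov z)) => oz; first exact: key.
set l := lab z.
have Ef : flip l (f ++ x :: z :: m ++ partner x :: h) =
          flip l f ++ x :: fl l z :: m ++ partner x :: flip l h.
  rewrite flip_cat /= flip_cat /= (flip_fresh nzm).
  have -> : lab (partner x) = lab x by [].
  by rewrite /l (negbTE nxz).
apply: (red_crst (flip_conn l W)); first by rewrite /flip size_map.
rewrite Ef; apply: key.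
- by rewrite /fl /l eqxx /ov /=.
- by rewrite lab_fl.
- by rewrite lab_fl.
- by rewrite -Ef; apply: wf_flip.
Qed.

Lemma reduce w : wf_code w -> w != [::] -> red w.
Proof.
move=> W ne.
have NU : ~~ uniq (map lab w).
  case: w W ne => // x t W _; apply/negP => U.
  have := uniq_count (lab x) U.
  by case/andP: W => _ /allP /(_ x (mem_head _ _)) /andP [_ /eqP ->].
have [f [x [m [y [h [Ew Ey Ux]]]]]] := first_rep NU.
have xw : x \in w by rewrite Ew mem_cat inE eqxx orbT.
have yw : y \in w by rewrite Ew mem_cat inE mem_cat inE eqxx !orbT.
have yx : y != x.
  apply/eqP => E; move: W => /andP [+ _]; rewrite Ew cat_uniq => /and3P [_ _ /= /andP [+ _]].
  by rewrite E mem_cat inE eqxx orbT.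
have Ey' := partner_unique W xw yw Ey yx.
rewrite Ew Ey' in W *.
case: (boolP (ov x)) => ox; first exact: walk.
set l := lab x.
have nxm : l \notin map lab m by move: Ux => /= /andP [].
have Ef : flip l (f ++ x :: m ++ partner x :: h) =
          flip l f ++ fl l x :: m ++ partner (fl l x) :: flip l h.
  by rewrite flip_cat /= flip_cat /= (flip_fresh nxm) -fl_partner.
apply: (red_crst (flip_conn l W)); first by rewrite /flip size_map.
rewrite Ef; apply: walk.
- by rewrite -Ef; apply: wf_flip.
- by rewrite /fl /l eqxx /ov /=.
- by rewrite /= lab_fl.
Qed.

Theorem mainTheorem4 (w : code) :
  wf_code w -> clos_refl_sym_trans code wD_step w trivial_code.
Proof.
have [n lt] := ubnP (size w); elim: n w lt => // n IH w lt W.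
case: (eqVneq w [::]) => [->|ne]; first exact: rst_refl.
have [w' [W' S C]] := reduce W ne.
apply: (crst_trans C); apply: IH => //.
by rewrite (leq_trans S) // -ltnS.
Qed.
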